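(* Let $K_1,K_2$ be non-trivial $\mathcal R$-dioids. Then for all $a,a'\in K_1$ and $b,b'\in K_2$: (i) if $a\otimes b=0$ in $K_1\otimes_{\mathcal R}K_2$, then $a=0$ in $K_1$ or $b=0$ in $K_2$; (ii) if $0\ne a\otimes b\le a'\otimes b'$ in $K_1\otimes_{\mathcal R}K_2$, then $0\ne a\le a'$ in $K_1$ and $0\ne b\le b'$ in $K_2$.
   Context: An $\mathcal R$-dioid is a dioid in which every regular subset of its multiplicative monoid has a supremum $\sum A$ with $\sum(AB)=(\sum A)(\sum B)$ (equivalently a $*$-continuous Kleene algebra); non-trivial means $0\ne1$; $\le$ is the natural order $x\le y$ iff $x+y=y$. The tensor product $K_1\otimes_{\mathcal R}K_2$ is the $\mathcal R$-dioid with $\mathcal R$-morphisms (dioid morphisms preserving suprema of regular sets) $\top_1,\top_2$ from $K_1,K_2$ with elementwise commuting images, universal among such pairs; concretely $\mathcal R(K_1\times K_2)/{\equiv}$, where $\equiv$ is the least $\mathcal R$-congruence identifying $A\times B$ with $\{(\sum A,\sum B)\}$ for regular $A\subseteq K_1,B\subseteq K_2$ (an $\mathcal R$-congruence being a semiring congruence such that regular sets with equal downward closures modulo it have congruent suprema). We write $a\otimes b=\top_1(a)\top_2(b)$, the class of $\{(a,b)\}$. *)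

(* Defs.v *)
From HB Require Import structures.
From mathcomp Require Import all_boot all_algebra.
Set Implicit Arguments. Unset Strict Implicit. Unset Printing Implicit Defensive.
Import GRing.Theory.
Local Open Scope ring_scope.

(* A dioid: a (not necessarily commutative) semiring with idempotent addition. *)
Definition idem_add (K : pzSemiRingType) := forall x : K, x + x = x.

Definition dle (K : pzSemiRingType) (x y : K) : Prop := x + y = y.

Inductive rexp (T : Type) : Type :=
| RZero | REps | RAtom of T | RPlus of rexp T & rexp T
| RDot of rexp T & rexp T | RStar of rexp T.
Arguments RZero {T}. Arguments REps {T}.

Inductive lang (K : pzSemiRingType) : rexp K -> K -> Prop :=
| lang_eps : lang REps 1
| lang_atom a : lang (RAtom a) a
| lang_plusl e1 e2 x : lang e1 x -> lang (RPlus e1 e2) x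
| lang_plusr e1 e2 x : lang e2 x -> lang (RPlus e1 e2) x
| lang_dot e1 e2 x y : lang e1 x -> lang e2 y -> lang (RDot e1 e2) (x * y)
| lang_star_nil e : lang (RStar e) 1
| lang_star_cons e x y : lang e x -> lang (RStar e) y -> lang (RStar e) (x * y).

Definition regular (K : pzSemiRingType) (A : K -> Prop) : Prop :=
  exists e : rexp K, forall x, A x <-> lang e x.

Definition setmul (K : pzSemiRingType) (A B : K -> Prop) : K -> Prop :=
  fun x => exists a b, [/\ A a, B b & x = a * b].

Definition setimg (K L : Type) (f : K -> L) (A : K -> Prop) : L -> Prop :=
  fun y => exists2 x, A x & y = f x.

Definition is_sup (K : pzSemiRingType) (A : K -> Prop) (s : K) : Prop :=
  (forall x, A x -> dle x s) /\
  (forall u, (forall x, A x -> dle x u) -> dle s u).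

Definition Rdioid (K : pzSemiRingType) : Prop :=
  [/\ idem_add K,
      (forall A : K -> Prop, regular A -> exists s, is_sup A s) &
      (forall (A B : K -> Prop) sA sB, regular A -> regular B ->
         is_sup A sA -> is_sup B sB -> is_sup (setmul A B) (sA * sB))].

Definition dioid_morph (K L : pzSemiRingType) (f : K -> L) : Prop :=
  [/\ f 0 = 0, f 1 = 1, (forall x y, f (x + y) = f x + f y) &
      (forall x y, f (x * y) = f x * f y)].

Definition Rmorph (K L : pzSemiRingType) (f : K -> L) : Prop :=
  dioid_morph f /\
  (forall (A : K -> Prop) s, regular A -> is_sup A s -> is_sup (setimg f A) (f s)).

Definition commuting_images (K1 K2 L : pzSemiRingType)
  (f1 : K1 -> L) (f2 : K2 -> L) : Prop :=
  forall x y, f1 x * f2 y = f2 y * f1 x.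

Definition is_Rtensor (K1 K2 T : pzSemiRingType) (t1 : K1 -> T) (t2 : K2 -> T)
  : Prop :=
  [/\ Rdioid T, Rmorph t1, Rmorph t2, commuting_images t1 t2 &
      forall (S : pzSemiRingType) (f1 : K1 -> S) (f2 : K2 -> S),
        Rdioid S -> Rmorph f1 -> Rmorph f2 -> commuting_images f1 f2 ->
        exists h : T -> S,
          [/\ Rmorph h, (forall x, h (t1 x) = f1 x), (forall y, h (t2 y) = f2 y) &
              forall h' : T -> S, Rmorph h' -> (forall x, h' (t1 x) = f1 x) ->
                 (forall y, h' (t2 y) = f2 y) -> forall z, h' z = h z]].

(* Main.v *)
Require Import Defs.
From HB Require Import structures.
From mathcomp Require Import all_boot all_algebra.
From mathcomp Require boolp.
From Stdlib Require Import Classical FunctionalExtensionality PropExtensionality ProofIrrelevance.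
Set Implicit Arguments. Unset Strict Implicit. Unset Printing Implicit Defensive.
Import GRing.Theory.
Local Open Scope ring_scope.

Section Closure.
Variables K1 K2 : pzSemiRingType.
Notation P := (K1 * K2)%type.

Lemma seteq (A B : P -> Prop) : (forall p, A p <-> B p) -> A = B.
Proof. move=> H; apply: functional_extensionality => p; apply: propositional_extensionality; exact: H. Qed.

Record closed (C : P -> Prop) : Prop := Closed {
  c_down : forall x y x' y', C (x, y) -> dle x' x -> dle y' y -> C (x', y');
  c_add1 : forall x x' y, C (x, y) -> C (x', y) -> C (x + x', y);
  c_add2 : forall x y y', C (x, y) -> C (x, y') -> C (x, y + y');
  c_sup1 : forall (A : K1 -> Prop) s y, regular A -> is_sup A s ->
             (forall x, A x -> C (x, y)) -> C (s, y);
  c_sup2 : forall (A : K2 -> Prop) s x, regular A -> is_sup A s ->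
             (forall y, A y -> C (x, y)) -> C (x, s) }.

Definition cl (X : P -> Prop) : P -> Prop :=
  fun p => forall C, closed C -> (forall q, X q -> C q) -> C p.

Lemma cl_closed X : closed (cl X).
Proof.
split.
- move=> x y x' y' H l1 l2 C HC HX; exact: (c_down HC (H C HC HX) l1 l2).
- move=> x x' y H1 H2 C HC HX; exact: (c_add1 HC (H1 C HC HX) (H2 C HC HX)).
- move=> x y y' H1 H2 C HC HX; exact: (c_add2 HC (H1 C HC HX) (H2 C HC HX)).
- move=> A s y rA sA H C HC HX; apply: (c_sup1 HC rA sA) => x Ax; exact: H.
- move=> A s x rA sA H C HC HX; apply: (c_sup2 HC rA sA) => y Ay; exact: H.
Qed.

Lemma in_cl (X : P -> Prop) p : X p -> cl X p.
Proof. by move=> Xp C _ H; apply: H. Qed.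

Lemma cl_min (X C : P -> Prop) : closed C -> (forall q, X q -> C q) -> forall p, cl X p -> C p.
Proof. by move=> HC H p Hp; apply: Hp. Qed.

Lemma cl_trans (X Y : P -> Prop) p : cl X p -> (forall q, X q -> cl Y q) -> cl Y p.
Proof. move=> Hp H; exact: (cl_min (cl_closed Y) H Hp). Qed.

Lemma clE (C : P -> Prop) : closed C -> cl C = C.
Proof. move=> HC; apply: seteq => p; split; [exact: cl_min HC (fun q h => h) p | exact: in_cl]. Qed.

Lemma cl_ext (A B : P -> Prop) : (forall p, A p -> cl B p) -> (forall p, B p -> cl A p) -> cl A = cl B.
Proof. move=> H1 H2; apply: seteq => p; split => h; apply: cl_trans h _ => //. Qed.

Lemma cl_cl X : cl (cl X) = cl X.
Proof. exact: clE (cl_closed X). Qed.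

Definition pt (q : P) : P -> Prop := fun r => r = q.
Definition bind (X : P -> Prop) (f : P -> P -> Prop) : P -> Prop :=
  fun p => exists q, X q /\ f q p.

Record S := MkS {
  fn :> (P -> Prop) -> (P -> Prop);
  fn_g1 : forall X, fn X = cl (bind X (fun q => fn (pt q)));
  fn_g2 : forall X, fn (cl X) = fn X }.

Lemma S_ext (F G : S) : (forall X, F X = G X) -> F = G.
Proof.
case: F => f a1 a2; case: G => g b1 b2 /= H.
have E : f = g by apply: functional_extensionality.
subst g; f_equal; apply: proof_irrelevance.
Qed.

Lemma fn_closed (F : S) X : closed (F X).
Proof. rewrite fn_g1; exact: cl_closed. Qed.

Lemma fn_cl (F : S) X : cl (F X) = F X.
Proof. exact: clE (fn_closed F X). Qed.

Lemma fn_union (F : S) (I : Type) (Q : I -> Prop) (Y : I -> P -> Prop) :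
  F (fun p => exists i, Q i /\ Y i p) = cl (fun p => exists i, Q i /\ F (Y i) p).
Proof.
rewrite fn_g1; apply: cl_ext.
- move=> p [q [[i [Qi Yq]] Fp]]; apply: in_cl; exists i; split => //.
  rewrite fn_g1; apply: in_cl; by exists q.
- move=> p [i [Qi]]; rewrite fn_g1 => Hp; apply: cl_trans Hp _ => r [q [Yq Fr]].
  apply: in_cl; exists q; split => //; by exists i.
Qed.

Lemma fn_mono (F : S) (X Y : P -> Prop) : (forall p, X p -> Y p) -> forall p, F X p -> F Y p.
Proof.
move=> H p; rewrite (fn_g1 F X) (fn_g1 F Y) => Hp; apply: cl_trans Hp _ => r [q [Xq Fr]].
apply: in_cl; exists q; split => //; exact: H.
Qed.

Definition empty : P -> Prop := fun _ => False.
Definition union (A B : P -> Prop) : P -> Prop := fun p => A p \/ B p.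

Lemma fn_empty (F : S) : F empty = cl empty.
Proof. rewrite fn_g1; congr cl; apply: seteq => p; split => // -[q []] //. Qed.

Program Definition zeroS : S := @MkS (fun _ => cl empty) _ _.
Next Obligation. apply: cl_ext => // p [q [_ Hp]]; by []. Qed.

Program Definition oneS : S := @MkS (fun X => cl X) _ _.
Next Obligation.
apply: cl_ext => p.
- move=> Xp; apply: in_cl; exists p; split => //; exact: in_cl.
- move=> [q [Xq Hq]]; apply: cl_trans Hq _ => r -> ; exact: in_cl.
Qed.
Next Obligation. exact: cl_cl. Qed.

Program Definition addS (F G : S) : S := @MkS (fun X => cl (union (F X) (G X))) _ _.
Next Obligation.
apply: cl_ext => p.
- case=> Hp; [rewrite fn_g1 in Hp | rewrite fn_g1 in Hp]; apply: cl_trans Hp _ => r [q [Xq Hr]];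
  apply: in_cl; exists q; split => //; apply: in_cl; by [left | right].
- move=> [q [Xq Hq]]; apply: cl_trans Hq _ => r [] Hr; apply: in_cl; [left|right];
  by apply: fn_mono Hr => s ->.
Qed.
Next Obligation. by rewrite !fn_g2. Qed.

Program Definition mulS (F G : S) : S := @MkS (fun X => F (G X)) _ _.
Next Obligation.
rewrite (fn_g1 G X) fn_g2.
have -> : bind X (fun q => G (pt q)) = (fun p => exists q, X q /\ G (pt q) p) by [].
rewrite fn_union; apply: cl_ext => p [q [Xq Hp]]; apply: in_cl; exists q; split => //.
Qed.
Next Obligation. by rewrite fn_g2. Qed.

Definition psup_fn (A : S -> Prop) (X : P -> Prop) : P -> Prop :=
  cl (fun p => exists F, A F /\ F X p).

Program Definition psup (A : S -> Prop) : S := @MkS (psup_fn A) _ _.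
Next Obligation.
rewrite /psup_fn; apply: cl_ext => p.
- move=> [F [AF Hp]]; rewrite fn_g1 in Hp; apply: cl_trans Hp _ => r [q [Xq Hr]].
  apply: in_cl; exists q; split => //; apply: in_cl; by exists F.
- move=> [q [Xq Hq]]; apply: cl_trans Hq _ => r [F [AF Hr]]; apply: in_cl; exists F; split => //.
  by apply: fn_mono Hr => s ->.
Qed.
Next Obligation.
rewrite /psup_fn; congr cl; apply: seteq => p; split => -[F [AF Hp]]; exists F; split => //;
  by [rewrite -fn_g2 | rewrite fn_g2].
Qed.


Lemma addSA : associative addS.
Proof.
move=> F G H; apply: S_ext => X /=; apply: cl_ext => p.
- case=> [Fp|Hp].
  + apply: in_cl; left; apply: in_cl; by left.
  + apply: cl_trans Hp _ => q [Gq|Hq]; apply: in_cl; [left; apply: in_cl; by right | by right].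
- case=> [Hp|Hp].
  + apply: cl_trans Hp _ => q [Fq|Gq]; apply: in_cl; [by left | right; apply: in_cl; by left].
  + apply: in_cl; right; apply: in_cl; by right.
Qed.

Lemma addSC : commutative addS.
Proof. move=> F G; apply: S_ext => X /=; congr cl; apply: seteq => p; rewrite /union; tauto. Qed.

Lemma add0S : left_id zeroS addS.
Proof.
move=> F; apply: S_ext => X /=; rewrite -[RHS]fn_cl; apply: cl_ext => p.
- case=> Hp; last by apply: in_cl.
  by apply: cl_trans Hp _ => q [].
- move=> Fp; apply: in_cl; by right.
Qed.

Lemma mulSA : associative mulS.
Proof. by move=> F G H; apply: S_ext. Qed.

Lemma mul1S : left_id oneS mulS.
Proof. move=> F; apply: S_ext => X /=; exact: fn_cl. Qed.

Lemma mulS1 : right_id oneS mulS.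
Proof. move=> F; apply: S_ext => X /=; exact: fn_g2. Qed.

Lemma mulSDl : left_distributive mulS addS.
Proof. by move=> F G H; apply: S_ext. Qed.

Lemma mulSDr : right_distributive mulS addS.
Proof.
move=> F G H; apply: S_ext => X /=; rewrite fn_g2.
have -> : union (G X) (H X) = (fun p => exists b : bool, True /\ (if b then G X else H X) p).
  apply: seteq => p; split; [case=> h; [by exists true | by exists false] | by case=> -[] [_ h]; [left|right]].
rewrite fn_union; congr cl; apply: seteq => p; split; [by case=> -[] [_ h]; [left|right] | case=> h; [by exists true | by exists false]].
Qed.

Lemma mul0S : left_zero zeroS mulS.
Proof. by move=> F; apply: S_ext. Qed.

Lemma mulS0 : right_zero zeroS mulS.
Proof. move=> F; apply: S_ext => X /=; rewrite fn_g2; exact: fn_empty. Qed.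

End Closure.

Definition SS (K1 K2 : pzSemiRingType) := S K1 K2.
HB.instance Definition _ (K1 K2 : pzSemiRingType) := boolp.gen_eqMixin (SS K1 K2).
HB.instance Definition _ (K1 K2 : pzSemiRingType) := boolp.gen_choiceMixin (SS K1 K2).
HB.instance Definition _ (K1 K2 : pzSemiRingType) :=
  GRing.isNmodule.Build (SS K1 K2) (@addSA K1 K2) (@addSC K1 K2) (@add0S K1 K2).
HB.instance Definition _ (K1 K2 : pzSemiRingType) :=
  GRing.Nmodule_isPzSemiRing.Build (SS K1 K2) (@mulSA K1 K2) (@mul1S K1 K2) (@mulS1 K1 K2)
    (@mulSDl K1 K2) (@mulSDr K1 K2) (@mul0S K1 K2) (@mulS0 K1 K2).


Section KLemmas.
Variable K : pzSemiRingType.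

Lemma dle0 (x : K) : dle 0 x.
Proof. by rewrite /dle add0r. Qed.

Lemma dle_mull (a x y : K) : dle x y -> dle (a * x) (a * y).
Proof. by rewrite /dle -mulrDr => ->. Qed.

Lemma dle_mulr (a x y : K) : dle x y -> dle (x * a) (y * a).
Proof. by rewrite /dle -mulrDl => ->. Qed.

Lemma dle0E (x : K) : dle x 0 -> x = 0.
Proof. by rewrite /dle addr0. Qed.

Lemma dle_addl (idem : idem_add K) (x y : K) : dle x (x + y).
Proof. by rewrite /dle addrA idem. Qed.

Lemma dle_add (x y z : K) : dle x z -> dle y z -> dle (x + y) z.
Proof. by rewrite /dle -addrA => hx ->. Qed.

Lemma reg_pt (a : K) : regular (fun x => x = a).
Proof.
exists (RAtom a) => x; split; first by move=> ->; constructor.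
by move=> H; inversion H.
Qed.

Lemma reg_empty : regular (fun _ : K => False).
Proof. exists RZero => x; split => // H; inversion H. Qed.

Lemma reg_mul (A B : K -> Prop) : regular A -> regular B -> regular (setmul A B).
Proof.
move=> [eA HA] [eB HB]; exists (RDot eA eB) => x; split.
- move=> [a [b [Aa Bb ->]]]; constructor; [exact/HA | exact/HB].
- move=> H; inversion H; subst; exists x0, y; split => //; [exact/HA | exact/HB].
Qed.

Lemma sup_pt (idem : idem_add K) (a : K) : is_sup (fun x => x = a) a.
Proof. split; [by move=> x ->; exact: idem | by move=> u H; apply: H]. Qed.

Lemma sup_empty : is_sup (fun _ : K => False) 0.
Proof. split => // u _; exact: dle0. Qed.

Lemma sup_mull (R : Rdioid K) (a : K) (A : K -> Prop) (s : K) : regular A -> is_sup A s ->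
  is_sup (setmul (fun x => x = a) A) (a * s).
Proof.
case: R => idem _ hm rA sA; apply: hm => //; [exact: reg_pt | exact: sup_pt].
Qed.

Lemma sup_mulr (R : Rdioid K) (a : K) (A : K -> Prop) (s : K) : regular A -> is_sup A s ->
  is_sup (setmul A (fun x => x = a)) (s * a).
Proof.
case: R => idem _ hm rA sA; apply: hm => //; [exact: reg_pt | exact: sup_pt].
Qed.

End KLemmas.

Section Main.
Variables K1 K2 : pzSemiRingType.
Hypothesis R1 : Rdioid K1.
Hypothesis R2 : Rdioid K2.
Notation P := (K1 * K2)%type.
Notation SK := (SS K1 K2).

Lemma zero1_in_cl (Y : P -> Prop) y : cl Y (0, y).
Proof. move=> C HC _; apply: (c_sup1 HC (@reg_empty K1) (@sup_empty K1)) => //. Qed.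

Lemma zero2_in_cl (Y : P -> Prop) x : cl Y (x, 0).
Proof. move=> C HC _; apply: (c_sup2 HC (@reg_empty K2) (@sup_empty K2)) => //. Qed.

Lemma pre1_closed a (C : P -> Prop) : closed C -> closed (fun p => C (a * p.1, p.2)).
Proof.
move=> HC; split => /=.
- move=> x y x' y' /= H l1 l2; apply: (c_down HC H) => //; exact: dle_mull.
- move=> x x' y /= H1 H2; rewrite /= mulrDr; apply: (c_add1 HC); [exact: H1 | exact: H2].
- move=> x y y' /= H1 H2; apply: (c_add2 HC); [exact: H1 | exact: H2].
- move=> A s y rA sA H; apply: (c_sup1 HC (reg_mul (reg_pt a) rA) (sup_mull R1 a rA sA)).
  by move=> z [a' [x [-> Ax ->]]]; apply: H.
- move=> A s x rA sA H; exact: (c_sup2 HC rA sA).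
Qed.

Lemma pre2_closed b (C : P -> Prop) : closed C -> closed (fun p => C (p.1, b * p.2)).
Proof.
move=> HC; split => /=.
- move=> x y x' y' /= H l1 l2; apply: (c_down HC H) => //; exact: dle_mull.
- move=> x x' y /= H1 H2; apply: (c_add1 HC); [exact: H1 | exact: H2].
- move=> x y y' /= H1 H2; rewrite /= mulrDr; apply: (c_add2 HC); [exact: H1 | exact: H2].
- move=> A s y rA sA H; exact: (c_sup1 HC rA sA).
- move=> A s x rA sA H; apply: (c_sup2 HC (reg_mul (reg_pt b) rA) (sup_mull R2 b rA sA)).
  by move=> z [b' [y [-> Ay ->]]]; apply: H.
Qed.

Definition img1 (a : K1) (X : P -> Prop) : P -> Prop :=
  fun p => exists q, X q /\ p = (a * q.1, q.2).
Definition img2 (b : K2) (X : P -> Prop) : P -> Prop :=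
  fun p => exists q, X q /\ p = (q.1, b * q.2).

Lemma cl_img1_cl a X : cl (img1 a (cl X)) = cl (img1 a X).
Proof.
apply: cl_ext => p.
- move=> [q [Hq ->]].
  apply: (cl_min (pre1_closed a (cl_closed (img1 a X))) _ Hq) => r Xr /=.
  apply: in_cl; by exists r.
- move=> [q [Xq ->]]; apply: in_cl; exists q; split => //; exact: in_cl.
Qed.

Lemma cl_img2_cl b X : cl (img2 b (cl X)) = cl (img2 b X).
Proof.
apply: cl_ext => p.
- move=> [q [Hq ->]].
  apply: (cl_min (pre2_closed b (cl_closed (img2 b X))) _ Hq) => r Xr /=.
  apply: in_cl; by exists r.
- move=> [q [Xq ->]]; apply: in_cl; exists q; split => //; exact: in_cl.
Qed.

Program Definition f1 (a : K1) : SK := @MkS K1 K2 (fun X => cl (img1 a X)) _ _.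
Next Obligation.
apply: cl_ext => p.
- move=> [q [Xq ->]]; apply: in_cl; exists q; split => //; apply: in_cl; by exists q.
- move=> [q [Xq Hq]]; apply: cl_trans Hq _ => r [s [-> ->]]; apply: in_cl; by exists q.
Qed.
Next Obligation. exact: cl_img1_cl. Qed.

Program Definition f2 (b : K2) : SK := @MkS K1 K2 (fun X => cl (img2 b X)) _ _.
Next Obligation.
apply: cl_ext => p.
- move=> [q [Xq ->]]; apply: in_cl; exists q; split => //; apply: in_cl; by exists q.
- move=> [q [Xq Hq]]; apply: cl_trans Hq _ => r [s [-> ->]]; apply: in_cl; by exists q.
Qed.
Next Obligation. exact: cl_img2_cl. Qed.


Lemma addSE (F G : SK) X : (F + G) X = cl (union (F X) (G X)).
Proof. by []. Qed.
Lemma mulSE (F G : SK) X : (F * G) X = F (G X).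
Proof. by []. Qed.
Lemma zeroSE X : (0 : SK) X = cl (@empty K1 K2).
Proof. by []. Qed.

Lemma dleS (F G : SK) : dle F G <-> (forall X p, F X p -> G X p).
Proof.
split.
- move=> H X p Fp; rewrite -H addSE; apply: in_cl; by left.
- move=> H; apply: S_ext => X; rewrite addSE -[RHS]fn_cl; apply: cl_ext => p.
  + case=> h; apply: in_cl => //; exact: H.
  + move=> h; apply: in_cl; by right.
Qed.

Lemma dle_antisym (F G : SK) : dle F G -> dle G F -> F = G.
Proof. rewrite /dle => h1 h2; rewrite -h1 -{1}h2; exact: addrC. Qed.

Lemma psup_sup (A : SK -> Prop) : is_sup A (psup A).
Proof.
split.
- move=> F AF; apply/dleS => X p Fp /=; apply: in_cl; by exists F.
- move=> u Hu; apply/dleS => X p /= Hp; apply: (cl_min (fn_closed u X) _ Hp).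
  move=> q [F [AF Fq]]; exact: (proj1 (dleS F u) (Hu F AF)).
Qed.

Lemma sup_uniq (A : SK -> Prop) s : is_sup A s -> s = psup A.
Proof.
move=> [h1 h2]; have [p1 p2] := psup_sup A.
apply: dle_antisym; [exact: h2 | exact: p2].
Qed.

Lemma S_Rdioid : Rdioid SK.
Proof.
split.
- move=> F; apply: S_ext => X; rewrite addSE -[RHS]fn_cl; congr cl; apply: seteq => p; rewrite /union; tauto.
- move=> A _; exists (psup A); exact: psup_sup.
- move=> A B sA sB _ _ hA hB; rewrite (sup_uniq hA) (sup_uniq hB).
  suff -> : (psup A : SK) * (psup B : SK) = psup (setmul A B) by exact: psup_sup.
  apply: S_ext => X; rewrite mulSE (fn_g2 (psup A)) /= /psup_fn; apply: cl_ext => p.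
  + move=> [F [AF Hp]]; rewrite fn_union in Hp; apply: cl_trans Hp _ => q [G [BG Hq]].
    apply: in_cl; exists ((F : SK) * (G : SK)); split => //; by exists F, G.
  + move=> [H [[F [G [AF BG ->]]] Hp]]; apply: in_cl; exists F; split => //.
    rewrite mulSE in Hp; apply: fn_mono Hp => r Gr; by exists G.
Qed.

Lemma idem1 : idem_add K1. Proof. by case: R1. Qed.
Lemma idem2 : idem_add K2. Proof. by case: R2. Qed.

Lemma f1_Rmorph : Rmorph f1.
Proof.
split; first split.
- apply: S_ext => X /=; apply: cl_ext => p //.
  move=> [q [_ ->]]; rewrite mul0r; exact: zero1_in_cl.
- apply: S_ext => X /=; congr cl; apply: seteq => p; split.
  + by move=> [q [Xq ->]]; rewrite mul1r -surjective_pairing.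
  + move=> Xp; exists p; split => //; rewrite mul1r; by case: p {Xp}.
- move=> a a'; apply: S_ext => X; rewrite addSE /=; apply: cl_ext => p.
  + move=> [q [Xq ->]]; rewrite mulrDl; apply: (c_add1 (cl_closed _)); apply: in_cl;
      [left | right]; apply: in_cl; by exists q.
  + case=> h; apply: cl_trans h _ => r [q [Xq ->]];
    (apply: (c_down (cl_closed _) (x := (a + a') * q.1) (y := q.2)); [apply: in_cl; by exists q | | exact: idem2]);
    rewrite mulrDl; [exact: dle_addl idem1 _ _ | rewrite addrC; exact: dle_addl idem1 _ _].
- move=> a a'; apply: S_ext => X; rewrite mulSE /= cl_img1_cl; congr cl; apply: seteq => p; split.
  + move=> [q [Xq ->]]; exists (a' * q.1, q.2); split; [by exists q | by rewrite /= mulrA].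
  + move=> [r [[q [Xq ->]] ->]]; exists q; by rewrite /= mulrA.
- move=> A s rA sA.
  suff -> : f1 s = psup (setimg f1 A) by exact: psup_sup.
  apply: S_ext => X /=; rewrite /psup_fn; apply: cl_ext => p.
  + move=> [q [Xq ->]].
    apply: (c_sup1 (cl_closed _) (reg_mul rA (reg_pt q.1)) (sup_mulr R1 q.1 rA sA)).
    move=> z [a [x [Aa -> ->]]]; apply: in_cl; exists (f1 a); split; first by exists a.
    apply: in_cl; by exists q.
  + move=> [F [[a Aa ->] h]]; apply: cl_trans h _ => r [q [Xq ->]].
    apply: (c_down (cl_closed _) (x := s * q.1) (y := q.2)); [apply: in_cl; by exists q | | exact: idem2].
    apply: dle_mulr; exact: (proj1 sA).
Qed.

Lemma f2_Rmorph : Rmorph f2.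
Proof.
split; first split.
- apply: S_ext => X /=; apply: cl_ext => p //.
  move=> [q [_ ->]]; rewrite mul0r; exact: zero2_in_cl.
- apply: S_ext => X /=; congr cl; apply: seteq => p; split.
  + by move=> [q [Xq ->]]; rewrite mul1r -surjective_pairing.
  + move=> Xp; exists p; split => //; rewrite mul1r; by case: p {Xp}.
- move=> a a'; apply: S_ext => X; rewrite addSE /=; apply: cl_ext => p.
  + move=> [q [Xq ->]]; rewrite mulrDl; apply: (c_add2 (cl_closed _)); apply: in_cl;
      [left | right]; apply: in_cl; by exists q.
  + case=> h; apply: cl_trans h _ => r [q [Xq ->]];
    (apply: (c_down (cl_closed _) (x := q.1) (y := (a + a') * q.2)); [apply: in_cl; by exists q | exact: idem1 | ]);
    rewrite mulrDl; [exact: dle_addl idem2 _ _ | rewrite addrC; exact: dle_addl idem2 _ _].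
- move=> a a'; apply: S_ext => X; rewrite mulSE /= cl_img2_cl; congr cl; apply: seteq => p; split.
  + move=> [q [Xq ->]]; exists (q.1, a' * q.2); split; [by exists q | by rewrite /= mulrA].
  + move=> [r [[q [Xq ->]] ->]]; exists q; by rewrite /= mulrA.
- move=> A s rA sA.
  suff -> : f2 s = psup (setimg f2 A) by exact: psup_sup.
  apply: S_ext => X /=; rewrite /psup_fn; apply: cl_ext => p.
  + move=> [q [Xq ->]].
    apply: (c_sup2 (cl_closed _) (reg_mul rA (reg_pt q.2)) (sup_mulr R2 q.2 rA sA)).
    move=> z [a [x [Aa -> ->]]]; apply: in_cl; exists (f2 a); split; first by exists a.
    apply: in_cl; by exists q.
  + move=> [F [[a Aa ->] h]]; apply: cl_trans h _ => r [q [Xq ->]].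
    apply: (c_down (cl_closed _) (x := q.1) (y := s * q.2)); [apply: in_cl; by exists q | exact: idem1 | ].
    apply: dle_mulr; exact: (proj1 sA).
Qed.

Lemma f_comm : commuting_images f1 f2.
Proof.
move=> a b; apply: S_ext => X; rewrite !mulSE /= cl_img1_cl cl_img2_cl; congr cl; apply: seteq => p; split.
- move=> [r [[q [Xq ->]] ->]]; exists (a * q.1, q.2); split => //; by exists q.
- move=> [r [[q [Xq ->]] ->]]; exists (q.1, b * q.2); split => //; by exists q.
Qed.

End Main.

Lemma dle_trans (K : pzSemiRingType) (x y z : K) : dle x y -> dle y z -> dle x z.
Proof. rewrite /dle => h1 h2; by rewrite -h2 addrA h1. Qed.

Section Final.
Variables K1 K2 : pzSemiRingType.
Hypothesis R1 : Rdioid K1.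
Hypothesis R2 : Rdioid K2.
Variables (a' : K1) (b' : K2).

Definition Wset : K1 * K2 -> Prop :=
  fun p => (p.1 = 0 \/ p.2 = 0) \/ (dle p.1 a' /\ dle p.2 b').

Lemma Wset_closed : closed Wset.
Proof.
rewrite /Wset; split => /=.
- move=> x y x0 y0 [[e|e]|[h1 h2]] l1 l2.
  + left; left; apply: dle0E; by rewrite -e.
  + left; right; apply: dle0E; by rewrite -e.
  + right; split; [exact: dle_trans l1 h1 | exact: dle_trans l2 h2].
- move=> x x0 y H1 H2; case: H1 => [[e1|e1]|[h1 h2]]; first by rewrite e1 add0r.
  + by left; right.
  + case: H2 => [[e2|e2]|[h3 h4]]; first by rewrite e2 addr0; right.
    * by left; right.
    * right; split => //; exact: dle_add.
- move=> x y y0 H1 H2; case: H1 => [[e1|e1]|[h1 h2]]; first by left; left.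
  + by rewrite e1 add0r.
  + case: H2 => [[e2|e2]|[h3 h4]]; first by left; left.
    * by rewrite e2 addr0; right.
    * right; split => //; exact: dle_add.
- move=> A s y rA sA H.
  case: (classic (y = 0)) => [->|y0]; first by left; right.
  case: (classic (exists x, A x /\ x <> 0)) => [[x [Ax x0]]|nx].
  + right; split.
    * apply: (proj2 sA) => z Az; case: (H z Az) => [[->|//]|[]//]; exact: dle0.
    * by case: (H x Ax) => [[]|[]].
  + left; left; apply: dle0E; apply: (proj2 sA) => z Az.
    case: (classic (z = 0)) => [->|z0]; first exact: dle0.
    by exfalso; apply: nx; exists z.
- move=> A s x rA sA H.
  case: (classic (x = 0)) => [->|x0]; first by left; left.
  case: (classic (exists y, A y /\ y <> 0)) => [[y [Ay y0]]|ny].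
  + right; split.
    * by case: (H y Ay) => [[]|[]].
    * apply: (proj2 sA) => z Az; case: (H z Az) => [[//|->]|[]//]; exact: dle0.
  + left; right; apply: dle0E; apply: (proj2 sA) => z Az.
    case: (classic (z = 0)) => [->|z0]; first exact: dle0.
    by exfalso; apply: ny; exists z.
Qed.

End Final.

Theorem corollary1 (K1 K2 T : pzSemiRingType) (t1 : K1 -> T) (t2 : K2 -> T) :
  Rdioid K1 -> Rdioid K2 -> (0 : K1) <> 1 -> (0 : K2) <> 1 ->
  is_Rtensor t1 t2 ->
  forall (a a' : K1) (b b' : K2),
    (t1 a * t2 b = 0 -> a = 0 \/ b = 0) /\
    (t1 a * t2 b <> 0 -> dle (t1 a * t2 b) (t1 a' * t2 b') ->
       (a <> 0 /\ dle a a') /\ (b <> 0 /\ dle b b')).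
Proof.
move=> R1 R2 _ _ [RT [[t10 _ _ _] _] [[t20 _ _ _] _] comm univ] a a' b b'.
have [h [[[h0 _ hadd hmul] _] h1 h2 _]] :=
  univ (SS K1 K2) (f1 K2 R1) (f2 K1 R2) (S_Rdioid K1 K2) (f1_Rmorph R1 R2) (f2_Rmorph R1 R2) (f_comm R1 R2).
have key x y : h (t1 x * t2 y) = f1 K2 R1 x * f2 K1 R2 y by rewrite hmul h1 h2.
pose X0 := pt ((1 : K1), (1 : K2)).
have mem (x : K1) (y : K2) : fn (f1 K2 R1 x * f2 K1 R2 y) X0 (x, y).
  rewrite mulSE /=; apply: in_cl; exists (1, y); split; last by rewrite mulr1.
  apply: in_cl; exists (1, 1); split => //; by rewrite /= mulr1.
split.
- move=> H0; have E : f1 K2 R1 a * f2 K1 R2 b = 0 by rewrite -key H0 h0.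
  have := mem a b; rewrite E zeroSE => H.
  have := cl_min (@Wset_closed K1 K2 0 0) (fun q (f : empty q) => match f with end) H.
  case => [W|[h3 _]]; [exact: W | left; exact: dle0E h3].
- move=> Hne Hle.
  have a0 : a <> 0 by move=> a0; apply: Hne; rewrite a0 t10 mul0r.
  have b0 : b <> 0 by move=> b0; apply: Hne; rewrite b0 t20 mulr0.
  have D : dle (f1 K2 R1 a * f2 K1 R2 b) (f1 K2 R1 a' * f2 K1 R2 b').
    by rewrite /dle -!key -hadd Hle.
  have := proj1 (dleS _ _) D X0 (a, b) (mem a b).
  rewrite mulSE /= (cl_img1_cl R1) => H.
  have sub : forall p, img1 a' (img2 b' X0) p -> Wset a' b' p.
    move=> p [r [[q [-> ->]] ->]]; right; rewrite /= !mulr1; split; [exact: (idem1 R1) | exact: (idem2 R2)].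
  have := cl_min (@Wset_closed K1 K2 a' b') sub H.
  case => /= [[e|e] | [l1 l2]] //.
Qed.
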